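(* Let $H$ be a graph, $r\ge\omega_0(H)$, $1\le u\le r$, and $n\ge u$. Let $d$ be a $u$-clique of $\mathrm{T}_r(n)$ whose vertices lie in $u$ parts of $\mathrm{T}_r(n)$ of largest sizes (i.e., the sizes of these $u$ parts are the $u$ largest part sizes, with multiplicity), and let $c$ be an arbitrary $u$-clique of $\mathrm{T}_r(n)$. Then the number of subgraphs of $\mathrm{T}_r(n)$ isomorphic to $H$ that contain at least one vertex of $c$ is at least the number that contain at least one vertex of $d$, and the latter number equals $\mathcal{N}(H,\mathrm{T}_r(n))-\mathcal{N}(H,\mathrm{T}_r(n-u))$.
   Context: All graphs are finite and simple. $\mathcal{N}(H,G)$ is the number of (not necessarily induced) subgraphs of $G$ isomorphic to $H$. $\mathrm{T}_r(n)$ is the Turán graph: complete $r$-partite on $n$ vertices with part sizes $\lfloor n/r\rfloor$ or $\lceil n/r\rceil$ ($\mathrm{T}_r(0)$ is the empty graph). For a graph $J$, $\omega_0(J)$ is the least positive integer such that for every integer $r\ge\omega_0(J)$ and every $n\ge1$, every $n$-vertex $K_{r+1}$-free graph $G$ satisfies $\mathcal{N}(J,G)\le\mathcal{N}(J,\mathrm{T}_r(n))$ (it exists by a theorem of Morrison, Nir, Norin, Rzążewski and Wesolek). *)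

(* Defs.v *)
From mathcomp Require Import all_boot.
Set Implicit Arguments. Unset Strict Implicit. Unset Printing Implicit Defensive.

(* A simple graph on a finite vertex type V is a symmetric irreflexive
   relation e : rel V.  A (not necessarily induced) subgraph of G is a pair
   (A, E) of a vertex set A and a set E of 2-element vertex sets (edges).   *)

Definition is_copy (HV V : finType) (eH : rel HV) (eG : rel V)
    (A : {set V}) (E : {set {set V}}) : bool :=
  [exists f : {ffun HV -> V},
    [&& injectiveb f, f @: setT == A,
        [forall x, forall y, eH x y ==> eG (f x) (f y)] &
        E == [set [set f p.1; f p.2] | p in [pred p : HV * HV | eH p.1 p.2]]]].

Definition copies (HV V : finType) (eH : rel HV) (eG : rel V) :
    {set {set V} * {set {set V}}} :=
  [set p | is_copy eH eG p.1 p.2].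

Definition NumCopies (HV V : finType) (eH : rel HV) (eG : rel V) : nat :=
  #|copies eH eG|.

Definition NumCopiesMeeting (HV V : finType) (eH : rel HV) (eG : rel V)
    (c : {set V}) : nat :=
  #|[set p in copies eH eG | p.1 :&: c != set0]|.

(* Turan graph T_r(n) on vertices 0..n-1; vertex i lies in part i %% r. *)
Definition turan_adj (r n : nat) : rel 'I_n :=
  fun i j => (i %% r != j %% r).

Arguments turan_adj r n : clear implicits.

Definition part_size (r n k : nat) : nat := #|[set i : 'I_n | i %% r == k]|.

Definition is_clique (V : finType) (eG : rel V) (c : {set V}) : bool :=
  [forall x in c, forall y in c, (x != y) ==> eG x y].

Definition Kfree (V : finType) (k : nat) (eG : rel V) : bool :=
  ~~ [exists S : {set V}, (#|S| == k) && is_clique eG S].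

Definition omega0_prop (HV : finType) (eH : rel HV) (m : nat) : Prop :=
  forall r, m <= r -> forall n, 0 < n ->
  forall eG : rel 'I_n, symmetric eG -> irreflexive eG -> Kfree r.+1 eG ->
    NumCopies eH eG <= NumCopies eH (turan_adj r n).

Definition is_omega0 (HV : finType) (eH : rel HV) (w : nat) : Prop :=
  [/\ 0 < w, omega0_prop eH w & forall m, 0 < m -> omega0_prop eH m -> w <= m].

(* the parts met by d are parts of largest size (u largest sizes with
   multiplicity): every part not met by d is no larger than any part met. *)
Definition in_largest_parts (r n : nat) (d : {set 'I_n}) : Prop :=
  forall k l : nat, k \in [seq (nat_of_ord i) %% r | i <- enum d] ->
    l < r -> l \notin [seq (nat_of_ord i) %% r | i <- enum d] ->
    part_size r n l <= part_size r n k.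

(* Main.v *)
Require Import Defs.
From mathcomp Require Import all_boot zify.
Set Implicit Arguments. Unset Strict Implicit. Unset Printing Implicit Defensive.

Section Transport.
Variables (HV : finType) (eH : rel HV).

Lemma imset_pair (V W : finType) (h : W -> V) (a b : W) :
  h @: [set a; b] = [set h a; h b].
Proof. by rewrite imsetU1 imset_set1. Qed.

Lemma transport (V W : finType) (eG : rel V) (eW : rel W) (C : {set V}) (h : W -> V) :
  injective h -> h @: setT = ~: C -> (forall x y, eW x y = eG (h x) (h y)) ->
  NumCopies eH eW = #|[set p in copies eH eG | p.1 :&: C == set0]|.
Proof.
move=> hinj himg hrel.
pose phi := fun p : {set W} * {set {set W}} =>
  ((h @: p.1, [set h @: (e : {set W}) | e in p.2]) : {set V} * {set {set V}}).
have phiinj : injective phi.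
  move=> [a1 b1] [a2 b2] /= [] /(imset_inj hinj) -> /(imset_inj (imset_inj hinj)) -> //.
rewrite /NumCopies -(card_imset _ phiinj); apply: eq_card => q.

rewrite [in RHS]inE; apply/imsetP/idP.
- move=> [p]; rewrite /copies inE => /existsP [f /and4P [/injectiveP finj /eqP fimg
     /forallP fed /eqP fE]] ->.
  rewrite /copies inE; apply/andP; split; last first.
    apply/eqP/setP=> v; rewrite !inE /=; apply/negbTE/negP=> /andP [vi vC].
    have : v \in h @: setT by apply: (subsetP (imsetS h (subsetT p.1))).
    by rewrite himg inE vC.
  apply/existsP; exists [ffun x => h (f x)]; apply/and4P; split.
  + by apply/injectiveP=> x y; rewrite !ffunE => /hinj /finj.
  + by rewrite /= -fimg -imset_comp; apply/eqP/eq_imset=> x; rewrite ffunE.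
  + apply/forallP=> x; apply/forallP=> y; apply/implyP=> exy; rewrite !ffunE -hrel.
    by move: (fed x) => /forallP /(_ y) /implyP; apply.
  + rewrite /= fE -imset_comp; apply/eqP/eq_imset=> pp /=.
    by rewrite imset_pair !ffunE.
- case: q => [qA qE]; rewrite /copies inE /= => /andP [/existsP [g /and4P
    [/injectiveP ginj /eqP gimg /forallP ged /eqP gE]] /eqP qC].
  have ex : forall x, exists w, g x = h w.
    move=> x; have : g x \in h @: setT.
      rewrite himg inE; apply/negP=> gC.
      have : g x \in qA :&: C by rewrite inE gC -gimg andbT; apply/imsetP; exists x.
      by rewrite qC inE.
    by case/imsetP=> w _ ->; exists w.
  have [f0 hf0] := fin_all_exists ex.
  pose f := [ffun x => f0 x].
  exists (f @: setT, [set [set f pp.1; f pp.2] | pp in [pred pp : HV * HV | eH pp.1 pp.2]]).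
    rewrite inE; apply/existsP; exists f; apply/and4P; split=> //.
    + apply/injectiveP=> x y; rewrite !ffunE => e; apply: ginj.
      by rewrite !hf0 e.
    + apply/forallP=> x; apply/forallP=> y; apply/implyP=> exy; rewrite !ffunE hrel -!hf0.
      by move: (ged x) => /forallP /(_ y) /implyP; apply.
  rewrite /phi /=; congr (_, _).
    by rewrite -imset_comp -gimg; apply/eq_imset=> x /=; rewrite ffunE hf0.
  rewrite gE -imset_comp; apply/eq_imset=> pp /=.
  by rewrite imset_pair !ffunE -!hf0.
Qed.
End Transport.

Lemma fiber_bij (V W L : finType) (w0 : W) (p : V -> L) (q : W -> L) (A : {set W}) :
  (forall l, #|[set x | p x == l]| = #|[set y in A | q y == l]|) ->
  exists h : V -> W, [/\ injective h, h @: setT = A & forall x, q (h x) = p x].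
Proof.
move=> hc.
pose X l := enum [set x | p x == l].
pose Y l := enum [set y in A | q y == l].
have sX l : size (X l) = #|[set x | p x == l]| by rewrite /X -cardE.
have sY l : size (Y l) = #|[set y in A | q y == l]| by rewrite /Y -cardE.
pose h x := nth w0 (Y (p x)) (index x (X (p x))).
have ilt x : index x (X (p x)) < size (Y (p x)).
  by rewrite sY -hc -sX index_mem /X mem_enum inE.
have hY x : h x \in Y (p x) by apply: mem_nth.
have hq x : q (h x) = p x /\ h x \in A.
  by move: (hY x); rewrite /Y mem_enum inE => /andP [-> /eqP ->].
exists h; split.
- move=> x y e.
  have epq : p x = p y by rewrite -(hq x).1 -(hq y).1 e.
  move: e; rewrite /h epq.
  move/eqP; rewrite nth_uniq ?ilt ?enum_uniq //; last by rewrite -epq ilt.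
  move/eqP=> ei.
  have xm : x \in X (p y) by rewrite /X mem_enum inE epq.
  have ym : y \in X (p y) by rewrite /X mem_enum inE.
  by rewrite -(nth_index x xm) ei nth_index.
- apply/setP=> y; apply/imsetP/idP.
  + by move=> [x _ ->]; exact: (hq x).2.
  + move=> yA.
    have ym : y \in Y (q y) by rewrite /Y mem_enum inE yA eqxx.
    have ilt2 : index y (Y (q y)) < size (X (q y)) by rewrite sX hc -sY index_mem.
    have [x0 _] : exists x0 : V, true.
      case: (X (q y)) ilt2 => [//|x0 _ _]; by exists x0.
    set x := nth x0 (X (q y)) (index y (Y (q y))).
    have xm : x \in X (q y) by apply: mem_nth.
    have px : p x = q y by move: xm; rewrite /X mem_enum inE => /eqP.
    exists x => //.
    by rewrite /h px index_uniq ?enum_uniq // nth_index.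
- by move=> x; exact: (hq x).1.
Qed.

Lemma part_formula r N k : 0 < r -> k < r ->
  #|[set i : 'I_N | i %% r == k]| = N %/ r + (k < N %% r).
Proof.
move=> r0 kr.
rewrite cardsE -sum1_card big_mkcond /=.
elim: N => [|N IH]; first by rewrite big_ord0 div0n mod0n.
rewrite big_ord_recr /= IH divnS // modnS.
have -> : (@ord_max N \in (fun x : 'I_N.+1 => eqn (x %% r) k)) = (N %% r == k) by [].
have ml := ltn_pmod N r0.
case: (boolP (r %| N.+1)) => hd.
  have e : N %% r = r.-1.
    have : r %| (N %% r).+1.
      have hd2 : r %| (N %/ r * r + N %% r).+1 by rewrite -divn_eq.
      by move: hd2; rewrite -addnS dvdn_addr // dvdn_mull.
    move/(dvdn_leq (ltn0Sn _)) => le; lia.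
  rewrite e; case: eqP => ek; lia.
case: eqP => ek; lia.
Qed.

Lemma balanced r N (f : 'I_r -> nat) : 0 < r -> (forall k l, f k <= (f l).+1) ->
  \sum_k f k = N ->
  (forall k, f k = N %/ r \/ f k = (N %/ r).+1) /\ #|[set k | f k == (N %/ r).+1]| = N %% r.
Proof.
case: r f => [//|r] f _ hb hs.
have [k0 hmin] : exists k0, forall k, predT k -> f k0 <= f k.
  by case: (@arg_minnP _ (@ord0 r) predT f isT) => k0 _ h; exists k0.
set b := f k0.
have hv : forall k, f k = b \/ f k = b.+1.
  move=> k; have := hmin k isT; have := hb k k0; rewrite -/b; lia.
set c := #|[set k | f k == b.+1]|.
have hsum : N = b * r.+1 + c.
  rewrite -hs (eq_bigr (fun k => b + (f k == b.+1))); last first.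
    by move=> k _; case: (hv k) => ->; rewrite ?eqxx ?addn1 // ltn_eqF // addn0.
  rewrite big_split /= sum_nat_const card_ord mulnC; congr (_ + _).
  rewrite /c -sum1_card [RHS]big_mkcond /=; apply: eq_bigr => i _; rewrite inE; by case: (f i == b.+1).
have clt : c < r.+1.
  have : c <= #|[set~ k0]|.
    apply: subset_leq_card; apply/subsetP=> k; rewrite !inE => /eqP fk.
    apply/eqP=> ek; by move: fk; rewrite ek -/b; lia.
  by rewrite cardsC1 card_ord.
have qd : N %/ r.+1 = b by rewrite hsum divnMDl // divn_small ?addn0.
have qm : N %% r.+1 = c by rewrite hsum modnMDl modn_small.
by rewrite qd qm.
Qed.

Definition ordmod r (r0 : 0 < r) (i : nat) : 'I_r := Ordinal (ltn_pmod i r0).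

Lemma sum_fibers m r (r0 : 0 < r) (A : {set 'I_m}) :
  \sum_(l < r) #|[set y in A | y %% r == l]| = #|A|.
Proof.
rewrite -sum1_card (partition_big (fun y : 'I_m => ordmod r0 y) predT) //=.
apply: eq_bigr => l _; rewrite -sum1_card; apply: eq_bigl => y; rewrite !inE.
by [].
Qed.

Lemma Kfree_turan_pull m n r (r0 : 0 < r) (h : 'I_m -> 'I_n) :
  Kfree r.+1 (fun i j => turan_adj r n (h i) (h j)).
Proof.
apply/negP=> /existsP [S /andP [/eqP cS cl]].
pose g i := ordmod r0 (h i).
have : #|g @: S| = #|S|.
  apply: card_in_imset => x y xS yS e; apply/eqP; apply/negP=> /negP nxy.
  move: cl => /forallP /(_ x) /implyP /(_ xS) /forallP /(_ y) /implyP /(_ yS).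
  by rewrite nxy /= /turan_adj; move: e => /(congr1 val) /= ->; rewrite eqxx.
rewrite cS => e; have := max_card (g @: S); rewrite e card_ord; lia.
Qed.

Lemma d_iso r n u (r0 : 0 < r) (d : {set 'I_n}) (hun : u <= n) (hu1 : 1 <= u)
  (hd : #|d| = u) (hdc : is_clique (turan_adj r n) d) (hdl : in_largest_parts r d) :
  exists h : 'I_(n - u) -> 'I_n, [/\ injective h, h @: setT = ~: d &
     forall i j, turan_adj r (n - u) i j = turan_adj r n (h i) (h j)].
Proof.
set N := n - u.
pose s l := #|[set y : 'I_n | y %% r == l]|.
pose dl l := #|[set y in d | y %% r == l]|.
pose s' l := #|[set y in ~: d | y %% r == l]|.
pose t l := #|[set i : 'I_N | i %% r == l]|.
have hs l : l < r -> s l = n %/ r + (l < n %% r) by move=> lr; exact: part_formula.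
have ht l : l < r -> t l = N %/ r + (l < N %% r) by move=> lr; exact: part_formula.
have hsd l : s' l + dl l = s l.
  rewrite /s' /dl /s addnC -(cardsID d [set y : 'I_n | y %% r == l]); congr (_ + _);
    by apply: eq_card => y; rewrite !inE // andbC.
have hdl1 l : dl l <= 1.
  rewrite leqNgt; apply/negP=> /(card_gt1P) [x [y [xd yd nxy]]].
  move: xd yd; rewrite !inE => /andP [xd /eqP xl] /andP [yd /eqP yl].
  move: hdc => /forallP /(_ x) /implyP /(_ xd) /forallP /(_ y) /implyP /(_ yd).
  by rewrite nxy /= /turan_adj xl yl eqxx.
have hdm l : (0 < dl l) = (l \in [seq (nat_of_ord i) %% r | i <- enum d]).
  apply/card_gt0P/mapP.
  - by move=> [y]; rewrite inE => /andP [yd /eqP yl]; exists y; rewrite ?mem_enum.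
  - by move=> [y]; rewrite mem_enum => yd ->; exists y; rewrite inE yd eqxx.
have hpw (k l : 'I_r) : s' k <= (s' l).+1.
  have := hsd k; have := hsd l; have := hdl1 k; have := hdl1 l;
  have := hs k (ltn_ord k); have := hs l (ltn_ord l).
  have := ltn_pmod n r0.
  have ek := hdm k; have el := hdm l.
  set D := [seq (nat_of_ord i) %% r | i <- enum d] in ek el.
  case: (boolP (nat_of_ord k \in D)) ek => kin ek; case: (boolP (nat_of_ord l \in D)) el => lin el.
  + lia.
  + lia.
  + have := hdl l k lin (ltn_ord k) kin; rewrite /part_size -/(s k) -/(s l); lia.
  + lia.
have hsum' : \sum_(l < r) s' l = N.
  by rewrite /s' (sum_fibers r0 (~: d)); have := cardsC d; rewrite card_ord hd /N; lia.
have hsumt : \sum_(l < r) t l = N.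
  rewrite -[RHS](card_ord N) -cardsT -(sum_fibers r0 setT); apply: eq_bigr => l _.
  by apply: eq_card => y; rewrite !inE.
have hpwt (k l : 'I_r) : t k <= (t l).+1.
  have := ht k (ltn_ord k); have := ht l (ltn_ord l); have := ltn_pmod N r0; lia.
have [bs1 bs2] := balanced r0 hpw hsum'.
have [bt1 bt2] := balanced r0 hpwt hsumt.
have cF (f : 'I_r -> bool) : #|[set x | f x == false]| = r - #|[set x | f x]|.
  have e := cardsC [set x | f x]; rewrite card_ord in e.
  have e2 : #|[set x | f x == false]| = #|~: [set x | f x]|.
    by apply: eq_card => x; rewrite !inE; case: (f x).
  lia.
have cT (f : 'I_r -> bool) : #|[set x | f x == true]| = #|[set x | f x]|.
  by apply: eq_card => x; rewrite !inE; case: (f x).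
have hb : forall b : bool, #|[set x : 'I_r | (t x == (N %/ r).+1) == b]| =
    #|[set y : 'I_r in [set: 'I_r] | (s' y == (N %/ r).+1) == b]|.
  have e : forall b, #|[set y : 'I_r in [set: 'I_r] | (s' y == (N %/ r).+1) == b]| =
            #|[set y : 'I_r | (s' y == (N %/ r).+1) == b]|.
    by move=> b; apply: eq_card => y; rewrite !inE.
  case; rewrite e.
    by rewrite !(cT (fun l : 'I_r => _ == _)) bs2 bt2.
  by rewrite !(cF (fun l : 'I_r => _ == _)) bs2 bt2.
have [sg [sginj sgim sgq]] := @fiber_bij _ _ _ (Ordinal r0)
   (fun l : 'I_r => t l == (N %/ r).+1) (fun l : 'I_r => s' l == (N %/ r).+1) setT hb.
have hsg l : s' (sg l) = t l.
  have := sgq l; have := bs1 (sg l); have := bt1 l.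
  case=> ->; case=> ->; rewrite ?eqxx //; rewrite ?ltn_eqF //= ?eqn_leq ?ltnn //.
have sgsur l : exists k, sg k = l.
  have : l \in sg @: setT by rewrite sgim inE.
  by case/imsetP=> k _ ->; exists k.
have n0 : 0 < n by lia.
have hb2 : forall l : 'I_r, #|[set x : 'I_N | sg (ordmod r0 x) == l]| =
    #|[set y in ~: d | ordmod r0 y == l]|.
  move=> l; have [k <-] := sgsur l.
  transitivity (t k).
    by apply: eq_card => x; rewrite !inE (inj_eq sginj).
  rewrite -hsg; apply: eq_card => x; rewrite !inE.
  by [].
have [h [hinj him hq]] := @fiber_bij _ _ _ (Ordinal n0)
   (fun x : 'I_N => sg (ordmod r0 x)) (fun y : 'I_n => ordmod r0 y) (~: d) hb2.
exists h; split=> // i j.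
rewrite /turan_adj.
have e : forall a b : nat, (a %% r == b %% r) = (ordmod r0 a == ordmod r0 b) by [].
by rewrite !e !hq (inj_eq sginj).
Qed.

Theorem mainTheorem12 (HV : finType) (eH : rel HV)
  (eH_sym : symmetric eH) (eH_irr : irreflexive eH)
  (w r u n : nat) (hw : is_omega0 eH w) (hwr : w <= r)
  (hu1 : 1 <= u) (hur : u <= r) (hun : u <= n)
  (c d : {set 'I_n})
  (hc : #|c| = u) (hcc : is_clique (turan_adj r n) c)
  (hd : #|d| = u) (hdc : is_clique (turan_adj r n) d)
  (hdl : in_largest_parts r d) :
  NumCopiesMeeting eH (turan_adj r n) d <= NumCopiesMeeting eH (turan_adj r n) c /\
  NumCopiesMeeting eH (turan_adj r n) d =
    NumCopies eH (turan_adj r n) - NumCopies eH (turan_adj r (n - u)).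
Proof.
have [w0 hom _] := hw.
have r0 : 0 < r by lia.
have hsplit C : NumCopies eH (turan_adj r n) = NumCopiesMeeting eH (turan_adj r n) C +
    #|[set p in copies eH (turan_adj r n) | p.1 :&: C == set0]|.
  rewrite /NumCopiesMeeting /NumCopies
    -(cardsID [set p : {set 'I_n} * {set {set 'I_n}} | p.1 :&: C != set0] (copies eH (turan_adj r n))).
  by congr (_ + _); apply: eq_card => p; rewrite !inE ?negbK // andbC.
have dcase : #|[set p in copies eH (turan_adj r n) | p.1 :&: d == set0]| =
    NumCopies eH (turan_adj r (n - u)).
  have [h [hinj him hrel]] := d_iso r0 hun hu1 hd hdc hdl.
  by rewrite (transport eH hinj him hrel).
have ccase : #|[set p in copies eH (turan_adj r n) | p.1 :&: c == set0]| <=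
    NumCopies eH (turan_adj r (n - u)).
  have n0 : 0 < n by lia.
  have hb : forall l : unit, #|[set x : 'I_(n - u) | tt == l]| = #|[set y in ~: c | tt == l]|.
    case; have := cardsC c; rewrite card_ord hc => e.
    transitivity #|[set: 'I_(n - u)]|; first by apply: eq_card => x; rewrite !inE.
    rewrite cardsT card_ord; transitivity #|~: c|; first lia.
    by apply: eq_card => x; rewrite !inE andbT.
  have [h [hinj him _]] := @fiber_bij _ _ _ (Ordinal n0)
     (fun _ : 'I_(n - u) => tt) (fun _ : 'I_n => tt) (~: c) hb.
  rewrite -(transport eH (eW := fun i j => turan_adj r n (h i) (h j)) hinj him) //.
  case: (posnP (n - u)) => nu.
  - have idim : (@id 'I_(n - u)) @: setT = ~: set0.
      by rewrite setC0; apply/setP=> x; rewrite !inE; apply/imsetP; exists x.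
    rewrite (transport eH (eW := fun i j => turan_adj r n (h i) (h j))
               (eG := turan_adj r (n - u)) (C := set0) (@inj_id _) idim).
      rewrite /NumCopies; apply: subset_leq_card; apply/subsetP=> p; rewrite inE.
      by case/andP.
    by move=> x; exfalso; have := ltn_ord x; lia.
  - apply: hom => //.
    + by move=> i j; rewrite /turan_adj eq_sym.
    + by move=> i; rewrite /turan_adj eqxx.
    + exact: Kfree_turan_pull.
have := hsplit c; have := hsplit d; lia.
Qed.
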